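(* Let $\mathcal{A}=(Q,(Q_n,Q_p),T,P)$ be a strongly connected $d$-dimensional VASS MDP, let $\mathbf{x}$ be a maximal solution of constraint system (I) and $(\mathbf{y},\mathbf{z})$ a maximal solution of constraint system (II). Then for every counter $c\in\{1,\dots,d\}$, either $\mathbf{y}(c)>0$ or $\sum_{t\in T}\mathbf{x}(t)\mathbf{u}_t(c)>0$. Moreover, for every transition $t=(p,\mathbf{u},q)\in T$: if $p\in Q_n$ then either $\mathbf{z}(q)-\mathbf{z}(p)+\sum_{i=1}^d\mathbf{u}(i)\mathbf{y}(i)<0$ or $\mathbf{x}(t)>0$; and if $p\in Q_p$ then either $\sum_{t'=(p,\mathbf{u}',q')\in\mathit{Out}(p)}P(t')\big(\mathbf{z}(q')-\mathbf{z}(p)+\sum_{i=1}^d\mathbf{u}'(i)\mathbf{y}(i)\big)<0$ or $\mathbf{x}(t)>0$.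
   Context: A $d$-dimensional VASS MDP is a tuple $\mathcal{A}=(Q,(Q_n,Q_p),T,P)$: $Q$ finite nonempty set of states partitioned into nondeterministic states $Q_n$ and probabilistic states $Q_p$; $T\subseteq Q\times\mathbb{Z}^d\times Q$ a finite set of transitions such that every $p\in Q$ has a nonempty set $\mathit{Out}(p)$ of outgoing transitions $(p,\mathbf{u},q)$; $P$ assigns to each $t\in\mathit{Out}(p)$ with $p\in Q_p$ a positive rational probability, summing to $1$ over $\mathit{Out}(p)$. $\mathit{In}(p)$ is the set of transitions of the form $(q,\mathbf{u},p)$, and $\mathbf{u}_t$ is the update vector of $t$. $\mathcal{A}$ is strongly connected if its underlying directed graph is strongly connected. Constraint system (I): find $\mathbf{x}\in\mathbb{Z}^T$ with $\sum_{t\in T}\mathbf{x}(t)\mathbf{u}_t\ge\vec{0}$ (componentwise), $\mathbf{x}\ge\vec{0}$, $\sum_{t\in\mathit{Out}(p)}\mathbf{x}(t)=\sum_{t\in\mathit{In}(p)}\mathbf{x}(t)$ for every $p\in Q$, and $\mathbf{x}(t)=P(t)\cdot\sum_{t'\in\mathit{Out}(p)}\mathbf{x}(t')$ for every $p\in Q_p$ and $t\in\mathit{Out}(p)$. Its objective inequalities are $\sum_{t\in T}\mathbf{x}(t)\mathbf{u}_t(c)>0$ for each counter $c$ and $\mathbf{x}(t)>0$ for each $t\in T$. Constraint system (II): find $\mathbf{y}\in\mathbb{Z}^d$, $\mathbf{z}\in\mathbb{Z}^Q$ with $\mathbf{y}\ge\vec 0$, $\mathbf{z}\ge\vec 0$,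 $\mathbf{z}(q)-\mathbf{z}(p)+\sum_{i=1}^d\mathbf{u}(i)\mathbf{y}(i)\le 0$ for every $(p,\mathbf{u},q)\in T$ with $p\in Q_n$, and $\sum_{t=(p,\mathbf{u},q)\in\mathit{Out}(p)}P(t)\big(\mathbf{z}(q)-\mathbf{z}(p)+\sum_{i=1}^d\mathbf{u}_t(i)\mathbf{y}(i)\big)\le 0$ for every $p\in Q_p$. Its objective inequalities are $\mathbf{y}(c)>0$ for each counter $c$, $\mathbf{z}(q)-\mathbf{z}(p)+\sum_i\mathbf{u}(i)\mathbf{y}(i)<0$ for each $(p,\mathbf{u},q)\in T$ with $p\in Q_n$, and the strict version of the probabilistic inequality for each $p\in Q_p$. Solutions of each system are closed under addition; a solution is maximal if every objective inequality that is satisfied (strictly) by some solution of the system is satisfied by it. *)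

(* Defs.v *)
From HB Require Import structures.
From mathcomp Require Import all_boot all_order all_algebra.
Set Implicit Arguments. Unset Strict Implicit. Unset Printing Implicit Defensive.
Import Order.TTheory GRing.Theory Num.Theory.
Local Open Scope ring_scope.

(* A d-dimensional VASS MDP is given by:
   - a finite type of states Q, with [prob : pred Q] selecting Q_p
     (Q_n = the complement);
   - a finite type of transitions T, each t : T having source [src t],
     target [tgt t] and update vector [u t : 'I_d -> int];
   - probabilities [P : T -> rat] (only meaningful on Out(p), p in Q_p).
   Counters are indexed by 'I_d (i.e. 0..d-1 instead of 1..d). *)

Section VASSMDP.
Variables (d : nat) (Q T : finType) (prob : pred Q) (src tgt : T -> Q)
          (u : T -> 'I_d -> int) (P : T -> rat).

Definition is_vass_mdp : Prop :=
  [/\ (0 < #|Q|)%N,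
      (forall t1 t2, src t1 = src t2 -> tgt t1 = tgt t2 -> u t1 =1 u t2 -> t1 = t2),
      (forall p, exists t, src t = p),
      (forall t, prob (src t) -> 0 < P t) &
      (forall p, prob p -> \sum_(t | src t == p) P t = 1)].

Definition mdp_edge : rel Q := fun p q => [exists t, (src t == p) && (tgt t == q)].
Definition strongly_connected : Prop := forall p q, connect mdp_edge p q.

Definition totaleff (x : T -> int) (c : 'I_d) : int := \sum_t x t * u t c.

Definition solI (x : T -> int) : Prop :=
  [/\ (forall c, 0 <= totaleff x c),
      (forall t, 0 <= x t),
      (forall p, \sum_(t | src t == p) x t = \sum_(t | tgt t == p) x t) &
      (forall t, prob (src t) ->
         (x t)%:~R = P t * (\sum_(t' | src t' == src t) x t')%:~R :> rat)].

Definition maximal_I (x : T -> int) : Prop :=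
  [/\ solI x,
      (forall c, (exists x', solI x' /\ 0 < totaleff x' c) -> 0 < totaleff x c) &
      (forall t, (exists x', solI x' /\ 0 < x' t) -> 0 < x t)].

Definition teff (y : 'I_d -> int) (z : Q -> int) (t : T) : int :=
  z (tgt t) - z (src t) + \sum_i u t i * y i.

Definition peff (y : 'I_d -> int) (z : Q -> int) (p : Q) : rat :=
  \sum_(t | src t == p) P t * (teff y z t)%:~R.

Definition solII (y : 'I_d -> int) (z : Q -> int) : Prop :=
  [/\ (forall c, 0 <= y c),
      (forall q, 0 <= z q),
      (forall t, ~~ prob (src t) -> teff y z t <= 0) &
      (forall p, prob p -> peff y z p <= 0)].

Definition maximal_II (y : 'I_d -> int) (z : Q -> int) : Prop :=
  [/\ solII y z,
      (forall c, (exists y' z', solII y' z' /\ 0 < y' c) -> 0 < y c),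
      (forall t, ~~ prob (src t) ->
         (exists y' z', solII y' z' /\ teff y' z' t < 0) -> teff y z t < 0) &
      (forall p, prob p ->
         (exists y' z', solII y' z' /\ peff y' z' p < 0) -> peff y z p < 0)].

End VASSMDP.

(* Main.v *)
Require Import Defs.
From HB Require Import structures.
From mathcomp Require Import all_boot all_order all_algebra.
From mathcomp Require Import ring lra zify.
Import Order.TTheory GRing.Theory Num.Theory.
Set Implicit Arguments. Unset Strict Implicit. Unset Printing Implicit Defensive.
Local Open Scope ring_scope.

Section Farkas.
Variables (R : realFieldType) (D : finType).

Definition dotv (v x : D -> R) : R := \sum_i v i * x i.

Fixpoint incone (s : seq (D -> R)) (a : D -> R) : Prop :=
  match s with
  | [::] => forall i, a i = 0
  | v :: s' => exists2 c, 0 <= c & incone s' (fun i => a i - c * v i)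
  end.

Fixpoint allge (s : seq (D -> R)) (x : D -> R) : Prop :=
  match s with
  | [::] => True
  | v :: s' => 0 <= dotv v x /\ allge s' x
  end.

Lemma incone_ext s a b : (forall i, a i = b i) -> incone s a -> incone s b.
Proof.
elim: s a b => [|v s IH] a b Hab /=.
  by move=> H i; rewrite -Hab.
case=> c c0 H; exists c => //; apply: IH H => i; by rewrite Hab.
Qed.

Lemma dotv_subr w y x k :
  dotv w (fun i => y i - k * x i) = dotv w y - k * dotv w x.
Proof.
rewrite /dotv mulr_sumr -sumrB; apply: eq_bigr => i _; ring.
Qed.

Lemma dotv_subl w v y k :
  dotv (fun i => w i - k * v i) y = dotv w y - k * dotv v y.
Proof.
rewrite /dotv mulr_sumr -sumrB; apply: eq_bigr => i _; ring.
Qed.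

Lemma farkas_n n : forall s a, size s = n ->
  incone s a \/ exists x, allge s x /\ dotv a x < 0.
Proof.
elim: n => [|n IHn] [|v s] a //= Hsz.
  have [/forallP H|H] := boolP [forall i, a i == 0].
    by left => i; apply/eqP/H.
  right; exists (fun i => - a i); split => //.
  move/forallPn: H => [i0 Hi0].
  rewrite /dotv (bigD1 i0) //=.
  have h1 : 0 < a i0 ^+ 2 by rewrite exprn_even_gt0 //= Hi0 orbT.
  have h2 : 0 <= \sum_(i | i != i0) a i ^+ 2 by apply: sumr_ge0 => i _; apply: sqr_ge0.
  have -> : \sum_(i | i != i0) a i * - a i = - \sum_(i | i != i0) a i ^+ 2.
    rewrite -sumrN; apply: eq_bigr => i _; rewrite mulrN expr2 //.
  rewrite mulrN -expr2; lra.
have {}Hsz : size s = n by case: Hsz.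
have IH : forall s' a', size s' = n -> incone s' a' \/ exists x, allge s' x /\ dotv a' x < 0 by [].
have [Ha|[x [Hx Hax]]] := IH s a Hsz.
  left; exists 0 => //; apply: incone_ext Ha => i; ring.
have [Hv|Hv] := leP 0 (dotv v x).
  by right; exists x.
pose al w := dotv w x / dotv v x.
pose pr (w : D -> R) := fun i => w i - al w * v i.
have Hvx : dotv v x != 0 by rewrite lt_eqF.
have lift : forall s' b, allge s' x -> incone (map pr s') b ->
    exists2 c0, 0 <= c0 & incone s' (fun i => b i - c0 * v i).
  elim=> [|w s' IHs] b /=.
    by move=> _ Hb; exists 0 => // i; rewrite Hb; ring.
  move=> [Hw Hs'] [c Hc Hb].
  have [c0' Hc0' H] := IHs _ Hs' Hb.
  have Halw : al w <= 0 by rewrite /al mulr_ge0_le0 // invr_le0 ltW.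
  exists (c0' - c * al w).
    have : 0 <= c * al w * -1 by rewrite mulrN1 oppr_ge0 mulr_ge0_le0.
    rewrite mulrN1; lra.
  exists c => //; apply: incone_ext H => i; rewrite /pr; ring.
have keyid : forall w y, dotv w (fun i => y i - (dotv v y / dotv v x) * x i)
    = dotv (pr w) y.
  move=> w y; rewrite dotv_subr /pr dotv_subl /al; ring.
have [Hc|[y [Hy Hay]]] := IH (map pr s) (pr a) (etrans (size_map _ _) Hsz).
  have [c0 Hc0 H] := lift _ _ Hx Hc.
  left; exists (al a + c0).
    have : 0 <= al a by rewrite /al ltW // nmulr_rgt0 ?invr_lt0.
    lra.
  apply: incone_ext H => i; rewrite /pr; ring.
right; exists (fun i => y i - (dotv v y / dotv v x) * x i); split; last by rewrite keyid.
split.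
  rewrite dotv_subr mulfVK //; lra.
elim: s {IH Hx lift Hsz} Hy => [|w s' IHs] //= [H1 H2]; split; last exact: IHs.
by rewrite keyid.
Qed.
Lemma farkas s a : incone s a \/ exists x, allge s x /\ dotv a x < 0.
Proof. exact: (@farkas_n (size s) s a erefl). Qed.
End Farkas.

Section Helpers.
Variables (R : realFieldType) (D : finType).

Lemma incone_map (X : eqType) (f : X -> D -> R) (L : seq X) a :
  uniq L -> incone (map f L) a ->
  exists l : X -> R, (forall x, 0 <= l x) /\
    forall i, a i = \sum_(x <- L) l x * f x i.
Proof.
elim: L a => [|x0 L IH] a /=.
  by move=> _ H; exists (fun _ => 0); split => // i; rewrite H big_nil.
move=> /andP [Hx0 HL] [c Hc H].
have [l' [Hl' Heq]] := IH _ HL H.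
exists (fun y => if y == x0 then c else l' y); split.
  by move=> y; case: (y == x0).
move=> i; rewrite big_cons eqxx.
have -> : \sum_(x <- L) (if x == x0 then c else l' x) * f x i
        = \sum_(x <- L) l' x * f x i.
  apply: eq_big_seq => x Hx.
  have -> : (x == x0) = false by apply/eqP => E; move: Hx0; rewrite -E Hx.
  by [].
by rewrite -Heq; ring.
Qed.

End Helpers.

Lemma allge_mapE (D : finType) (X : eqType) (f : X -> D -> rat) (L : seq X) x :
  allge (map f L) x -> forall y, y \in L -> 0 <= dotv (f y) x.
Proof.
elim: L => [|y0 L IH] //= [H1 H2] y; rewrite inE => /orP [/eqP -> //|].
exact: IH.
Qed.

Lemma int_scale (D : finType) (f : D -> rat) :
  exists N : int, 0 < N /\ exists F : D -> int,
    forall i, (F i)%:~R = N%:~R * f i.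
Proof.
exists (\prod_i denq (f i)); split.
  by apply: prodr_gt0 => i _; apply: denq_gt0.
exists (fun i => numq (f i) * \prod_(j | j != i) denq (f j)) => i.
rewrite [X in _ = X%:~R * _](bigD1 i) //= !intrM numqE; ring.
Qed.

Lemma sum_delta (I : finType) (a : I) (F : I -> rat) :
  \sum_i F i * (a == i)%:R = F a.
Proof.
rewrite (bigD1 a) //= eqxx mulr1 big1 ?addr0 // => i Hi.
by rewrite eq_sym (negbTE Hi) mulr0.
Qed.

Lemma sum_ind (I : finType) (b : pred I) (F : I -> rat) :
  \sum_(i | b i) F i = \sum_i (b i)%:R * F i.
Proof.
by rewrite big_mkcond; apply: eq_bigr => i _; case: (b i); rewrite ?mul1r ?mul0r.
Qed.

Section Main.
Variables (d : nat) (Q T : finType) (prob : pred Q) (src tgt : T -> Q)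
          (u : T -> 'I_d -> int) (P : T -> rat).

Definition Lab := (('I_d + T) + ((Q + Q) + (T + T)))%type.

Definition fr (p : Q) (t' : T) : rat := (src t' == p)%:R - (tgt t' == p)%:R.
Definition gt (t t' : T) : rat :=
  if prob (src t) then (t' == t)%:R - P t * (src t' == src t)%:R else 0.

Definition row (l : Lab) : T -> rat :=
  match l with
  | inl (inl c) => fun t' => (u t' c)%:~R
  | inl (inr t) => fun t' => (t' == t)%:R
  | inr (inl (inl p)) => fr p
  | inr (inl (inr p)) => fun t' => - fr p t'
  | inr (inr (inl t)) => gt t
  | inr (inr (inr t)) => fun t' => - gt t t'
  end.

Lemma dot_e t x : dotv (row (inl (inr t))) x = x t.
Proof.
rewrite /dotv /= (bigD1 t) //= eqxx mul1r big1 ?addr0 // => t' /negbTE ->.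
by rewrite mul0r.
Qed.

Lemma dot_f p x : dotv (fr p) x =
  \sum_(t | src t == p) x t - \sum_(t | tgt t == p) x t.
Proof.
rewrite (sum_ind (fun t => src t == p)) (sum_ind (fun t => tgt t == p)) -sumrB /dotv.
apply: eq_bigr => i _; rewrite /fr; ring.
Qed.

Lemma dot_fN p x : dotv (fun t' => - fr p t') x = - dotv (fr p) x.
Proof. rewrite /dotv -sumrN; apply: eq_bigr => i _; ring. Qed.

Lemma dot_g t x : prob (src t) -> dotv (gt t) x =
  x t - P t * \sum_(t' | src t' == src t) x t'.
Proof.
move=> Hp; rewrite (sum_ind (fun t' => src t' == src t)) mulr_sumr -(dot_e t x) -sumrB /dotv.
apply: eq_bigr => i _; rewrite /gt Hp; ring.
Qed.

Lemma dot_gN t x : dotv (fun t' => - gt t t') x = - dotv (gt t) x.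
Proof. rewrite /dotv -sumrN; apply: eq_bigr => i _; ring. Qed.

Lemma cast_sum (X : T -> int) (N : int) (x : T -> rat) (b : pred T) :
  (forall t, (X t)%:~R = N%:~R * x t) ->
  (\sum_(t | b t) X t)%:~R = N%:~R * \sum_(t | b t) x t :> rat.
Proof.
move=> HX; rewrite rmorph_sum mulr_sumr; apply: eq_bigr => t _; exact: HX.
Qed.

Lemma primal x k :
  (forall l, 0 <= dotv (row l) x) -> 0 < dotv (row k) x ->
  exists X, solI prob src tgt u P X /\
    (forall c, k = inl (inl c) -> 0 < totaleff u X c) /\
    (forall t, k = inl (inr t) -> 0 < X t).
Proof.
move=> Hall Hk.
have [N [HN [X HX]]] := int_scale x.
have HNr : 0 < N%:~R :> rat by rewrite ltr0z.
have Htot c : (totaleff u X c)%:~R = N%:~R * dotv (row (inl (inl c))) x.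
  rewrite /totaleff rmorph_sum /dotv mulr_sumr; apply: eq_bigr => t _ /=.
  by rewrite intrM HX; ring.
exists X; split; [split|split].
- by move=> c; rewrite -(ler0z rat) Htot mulr_ge0 // ltW.
- by move=> t; rewrite -(ler0z rat) HX -(dot_e t) mulr_ge0 // ltW.
- move=> p; apply: (@intr_inj rat); rewrite !(cast_sum _ HX).
  have h1 := Hall (inr (inl (inl p))); have h2 := Hall (inr (inl (inr p))).
  rewrite /= dot_fN dot_f in h1 h2.
  have -> : \sum_(t | src t == p) x t = \sum_(t | tgt t == p) x t by lra.
  by [].
- move=> t Hp; rewrite (cast_sum _ HX) HX.
  have h1 := Hall (inr (inr (inl t))); have h2 := Hall (inr (inr (inr t))).
  rewrite /= dot_gN dot_g // in h1 h2.
  have -> : x t = P t * \sum_(t' | src t' == src t) x t' by lra.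
  ring.
- by move=> c Ec; rewrite -(ltr0z rat) Htot mulr_gt0 // -Ec.
- by move=> t Et; rewrite -(ltr0z rat) HX -(dot_e t) mulr_gt0 // -Et.
Qed.


Lemma dual k : is_vass_mdp prob src tgt u P ->
  incone (map row (index_enum Lab)) (fun t => - row k t) ->
  exists Y Z, solII prob src tgt u P Y Z /\
   (forall c, k = inl (inl c) -> 0 < Y c) /\
   (forall t, k = inl (inr t) ->
      (~~ prob (src t) -> teff src tgt u Y Z t < 0) /\
      (prob (src t) -> peff src tgt u P Y Z (src t) < 0)).
Proof.
case=> _ _ _ HP Hsum Hc.
have [lam [Hlam Heq]] := incone_map (index_enum_uniq Lab) Hc.
pose mu l := lam l + (l == k)%:R.
have Hmu l : 0 <= mu l by rewrite /mu addr_ge0.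
have Hmuk : 1 <= mu k by rewrite /mu eqxx lerDr.
have E t' : \sum_l mu l * row l t' = 0.
  rewrite /mu; under eq_bigr do rewrite mulrDl.
  rewrite big_split /= -Heq (bigD1 k) //= eqxx mul1r big1 ?addr0 ?addNr //.
  by move=> l /negbTE ->; rewrite mul0r.
pose yQ c := mu (inl (inl c)).
pose sQ t := mu (inl (inr t)).
pose zQ p := mu (inr (inl (inr p))) - mu (inr (inl (inl p))).
pose wQ t := mu (inr (inr (inl t))) - mu (inr (inr (inr t))).
pose G t' := \sum_t wQ t * gt t t'.
pose teffQ t := zQ (tgt t) - zQ (src t) + \sum_i (u t i)%:~R * yQ i.
have decomp t' : \sum_l mu l * row l t' = teffQ t' + sQ t' + G t'.
  rewrite !big_sumType /=.
  have A1 : \sum_(i < d) mu (inl (inl i)) * (u t' i)%:~R = \sum_i (u t' i)%:~R * yQ i.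
    by apply: eq_bigr => i _; rewrite mulrC.
  have A2 : \sum_i mu (inl (inr i)) * (t' == i)%:R = sQ t' by rewrite sum_delta.
  have A3 : \sum_i mu (inr (inl (inl i))) * fr i t' +
            \sum_i mu (inr (inl (inr i))) * - fr i t' = zQ (tgt t') - zQ (src t').
    rewrite -big_split /=.
    transitivity (\sum_i (zQ i * (tgt t' == i)%:R - zQ i * (src t' == i)%:R)).
      by apply: eq_bigr => i _; rewrite /fr /zQ !(eq_sym _ i); ring.
    by rewrite sumrB !sum_delta.
  have A4 : \sum_i mu (inr (inr (inl i))) * gt i t' +
            \sum_i mu (inr (inr (inr i))) * - gt i t' = G t'.
    by rewrite -big_split /=; apply: eq_bigr => i _; rewrite /wQ; ring.
  rewrite A1 A2 A3 A4 /teffQ; ring.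
have Hte t' : teffQ t' = - sQ t' - G t'.
  have := E t'; rewrite decomp; lra.
have G0 t' : ~~ prob (src t') -> G t' = 0.
  move=> Hnp; apply: big1 => t _; rewrite /gt.
  case Hpt: (prob (src t)); last by rewrite mulr0.
  have -> : (t' == t) = false by apply/eqP => Et; move: Hnp; rewrite Et Hpt.
  have -> : (src t' == src t) = false by apply/eqP => Et; move: Hnp; rewrite Et Hpt.
  by rewrite mulr0 subr0 mulr0.
have Gp p : prob p -> \sum_(t' | src t' == p) P t' * G t' = 0.
  move=> Hp; rewrite /G; under eq_bigr do rewrite mulr_sumr.
  rewrite exchange_big /=; apply: big1 => t _.
  transitivity (wQ t * \sum_(t' | src t' == p) P t' * gt t t').
    by rewrite mulr_sumr; apply: eq_bigr => t' _; ring.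
  rewrite /gt; case Hpt: (prob (src t)); last by rewrite big1 ?mulr0 // => t' _; rewrite mulr0.
  have [Hst|Hst] := eqVneq (src t) p.
    transitivity (wQ t * (\sum_(t' | src t' == p) P t' * (t' == t)%:R
                         - P t * \sum_(t' | src t' == p) P t')).
      congr (_ * _); rewrite mulr_sumr -sumrB; apply: eq_big => // t' /eqP Ht'.
      rewrite Ht' Hst eqxx /=; ring.
    rewrite Hsum // (bigD1 t) /=; last by rewrite Hst.
    rewrite eqxx big1 ?addr0 /=; first by rewrite mulr1 subrr mulr0.
    by move=> t' /andP [_ /negbTE ->]; rewrite mulr0.
  rewrite big1 ?mulr0 // => t' /eqP Ht'.
  have -> : (t' == t) = false by apply/eqP => Et; move: Hst; rewrite -Et Ht' eqxx.
  have -> : (src t' == src t) = false by rewrite Ht' eq_sym (negbTE Hst).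
  by rewrite mulr0 subr0 mulr0.
pose peffQ p := \sum_(t | src t == p) P t * teffQ t.
have Hpe p : prob p -> peffQ p = - \sum_(t | src t == p) P t * sQ t.
  move=> Hp; rewrite /peffQ.
  transitivity (- \sum_(t | src t == p) P t * sQ t - \sum_(t' | src t' == p) P t' * G t').
    by rewrite -sumrN -sumrB; apply: eq_bigr => t _; rewrite Hte; ring.
  by rewrite Gp // subr0.
pose f (v : 'I_d + Q) := match v with inl c => yQ c | inr q => zQ q end.
have [N [HN [F HF]]] := int_scale f.
have HNr : 0 < N%:~R :> rat by rewrite ltr0z.
pose Y c := F (inl c).
pose Zr q := F (inr q).
pose M := \sum_q `|Zr q|.
pose Z q := Zr q + M.
have Hteff t : (teff src tgt u Y Z t)%:~R = N%:~R * teffQ t.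
  have Hs : (\sum_i u t i * Y i)%:~R = N%:~R * \sum_i (u t i)%:~R * yQ i :> rat.
    rewrite rmorph_sum mulr_sumr; apply: eq_bigr => i _.
    by rewrite /= intrM /Y HF /=; ring.
  rewrite /teff /Z.
  have -> : Zr (tgt t) + M - (Zr (src t) + M) = Zr (tgt t) - Zr (src t) by ring.
  by rewrite intrD intrB Hs /Zr !HF /= /teffQ; ring.
have Hpeff p : peff src tgt u P Y Z p = N%:~R * peffQ p.
  by rewrite /peff /peffQ mulr_sumr; apply: eq_bigr => t _; rewrite Hteff; ring.
have HsP p : prob p -> 0 <= \sum_(t | src t == p) P t * sQ t.
  move=> Hp; apply: sumr_ge0 => t /eqP Ht; rewrite mulr_ge0 ?Hmu // ltW // HP //; by rewrite Ht.
exists Y; exists Z; split; [split|split].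
- move=> c; rewrite -(ler0z rat) /Y HF /=; apply: mulr_ge0; [exact: ltW | exact: Hmu].
- move=> q; rewrite /Z.
  have H : `|Zr q| <= M.
    rewrite /M (bigD1 q) //= lerDl; apply: sumr_ge0 => i _; exact: normr_ge0.
  have := lerNnormlW H; lia.
- move=> t Hnp; rewrite -(lerz0 rat) Hteff Hte G0 // subr0.
  apply: mulr_ge0_le0; [exact: ltW | rewrite oppr_le0; apply: Hmu].
- move=> p Hp; rewrite Hpeff Hpe //.
  apply: mulr_ge0_le0; [exact: ltW | rewrite oppr_le0; exact: HsP].
- move=> c Ec; rewrite -(ltr0z rat) /Y HF /= mulr_gt0 // /yQ -Ec.
  by apply: lt_le_trans Hmuk.
move=> t Et; split.
  move=> Hnp; rewrite -(ltrz0 rat) Hteff Hte G0 // subr0.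
  rewrite pmulr_rlt0 // oppr_lt0 /sQ -Et; by apply: lt_le_trans Hmuk.
move=> Hp; rewrite Hpeff Hpe // pmulr_rlt0 // oppr_lt0.
rewrite (bigD1 t) //=.
have h1 : 0 <= \sum_(i | (src i == src t) && (i != t)) P i * sQ i.
  apply: sumr_ge0 => t' /andP [/eqP Ht' _]; apply: mulr_ge0; last exact: Hmu.
  by apply: ltW; apply: HP; rewrite Ht'.
have h2 : 0 < P t * sQ t.
  apply: mulr_gt0; first exact: HP.
  rewrite /sQ -Et; by apply: lt_le_trans Hmuk.
lra.
Qed.

End Main.

Theorem lemma4p2 (d : nat) (Q T : finType) (prob : pred Q) (src tgt : T -> Q)
  (u : T -> 'I_d -> int) (P : T -> rat)
  (Hmdp : is_vass_mdp prob src tgt u P)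
  (Hsc : strongly_connected src tgt)
  (x : T -> int) (y : 'I_d -> int) (z : Q -> int)
  (Hx : maximal_I prob src tgt u P x)
  (Hyz : maximal_II prob src tgt u P y z) :
  (forall c : 'I_d, 0 < y c \/ 0 < totaleff u x c) /\
  (forall t : T,
     (~~ prob (src t) -> teff src tgt u y z t < 0 \/ 0 < x t) /\
     (prob (src t) -> peff src tgt u P y z (src t) < 0 \/ 0 < x t)).
Proof.
have key : forall k : Lab d Q T,
  (exists X, solI prob src tgt u P X /\
    (forall c, k = inl (inl c) -> 0 < totaleff u X c) /\
    (forall t, k = inl (inr t) -> 0 < X t)) \/
  (exists Y Z, solII prob src tgt u P Y Z /\
   (forall c, k = inl (inl c) -> 0 < Y c) /\
   (forall t, k = inl (inr t) ->
      (~~ prob (src t) -> teff src tgt u Y Z t < 0) /\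
      (prob (src t) -> peff src tgt u P Y Z (src t) < 0))).
  move=> k.
  have [H|[x0 [Hall Hdot]]] :=
    farkas (map (row prob src tgt u P) (index_enum (Lab d Q T)))
           (fun t => - row prob src tgt u P k t).
    by right; apply: dual.
  left; apply: primal.
    by move=> l; apply: (allge_mapE Hall); exact: mem_index_enum.
  have E : dotv (fun t => - row prob src tgt u P k t) x0
           = - dotv (row prob src tgt u P k) x0.
    by rewrite /dotv -sumrN; apply: eq_bigr => i _; ring.
  move: Hdot; rewrite E; lra.
case: Hx => HsolI HxI1 HxI2; case: Hyz => HsolII Hy1 Hy2 Hy3.
split.
  move=> c; case: (key (inl (inl c))) => [[X [HX [H1 _]]]|[Y [Z [HYZ [H1 _]]]]].
    by right; apply: HxI1; exists X; split => //; exact: H1.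
  by left; apply: Hy1; exists Y, Z; split => //; exact: H1.
move=> t; case: (key (inl (inr t))) => [[X [HX [_ H2]]]|[Y [Z [HYZ [_ H2]]]]].
  by split => _; right; apply: HxI2; exists X; split => //; exact: H2.
have [H3 H4] := H2 t erefl.
split => Hp; left.
  by apply: Hy2 => //; exists Y, Z; split => //; exact: H3.
by apply: Hy3 => //; exists Y, Z; split => //; exact: H4.
Qed.
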